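(* Every right quasi-duo exchange ring is feckly clean, and every left quasi-duo exchange ring is feckly clean.
   Context: Rings are associative with identity, not necessarily commutative; $J(R)$ is the Jacobson radical. A ring is right (resp. left) quasi-duo if every maximal right (resp. left) ideal is a two-sided ideal. A ring $R$ is an exchange ring if for every $a\in R$ there is an idempotent $e\in R$ with $e\in aR$ and $1-e\in(1-a)R$. An element $u\in R$ is full if $RuR=R$. An element $a\in R$ is feckly clean if there exist $e\in R$ and a full element $u\in R$ with $a=e+u$ and $eR(1-e)\subseteq J(R)$; $R$ is feckly clean if every element is feckly clean. *)

(* Defs.v *)
From HB Require Import structures.
From mathcomp Require Import all_boot all_order all_algebra.
Set Implicit Arguments. Unset Strict Implicit. Unset Printing Implicit Defensive.
Import GRing.Theory.
Local Open Scope ring_scope.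

Definition right_ideal (R : nzRingType) (I : R -> Prop) : Prop :=
  I 0 /\ (forall a b, I a -> I b -> I (a + b)) /\ (forall a r, I a -> I (a * r)).

Definition left_ideal (R : nzRingType) (I : R -> Prop) : Prop :=
  I 0 /\ (forall a b, I a -> I b -> I (a + b)) /\ (forall a r, I a -> I (r * a)).

Definition two_sided_ideal (R : nzRingType) (I : R -> Prop) : Prop :=
  right_ideal I /\ left_ideal I.

Definition maximal_right_ideal (R : nzRingType) (I : R -> Prop) : Prop :=
  right_ideal I /\ ~ I 1 /\
  (forall J : R -> Prop, right_ideal J -> (forall x, I x -> J x) ->
     ~ J 1 -> forall x, J x -> I x).

Definition maximal_left_ideal (R : nzRingType) (I : R -> Prop) : Prop :=
  left_ideal I /\ ~ I 1 /\
  (forall J : R -> Prop, left_ideal J -> (forall x, I x -> J x) ->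
     ~ J 1 -> forall x, J x -> I x).

Definition jacobson (R : nzRingType) (x : R) : Prop :=
  forall I : R -> Prop, maximal_right_ideal I -> I x.

Definition right_quasi_duo (R : nzRingType) : Prop :=
  forall I : R -> Prop, maximal_right_ideal I -> two_sided_ideal I.

Definition left_quasi_duo (R : nzRingType) : Prop :=
  forall I : R -> Prop, maximal_left_ideal I -> two_sided_ideal I.

Definition exchange_ring (R : nzRingType) : Prop :=
  forall a : R, exists e : R,
    e * e = e /\ (exists r, e = a * r) /\ (exists s, 1 - e = (1 - a) * s).

(* u is full: RuR = R, i.e. 1 is a finite sum of elements x * u * y *)
Definition full (R : nzRingType) (u : R) : Prop :=
  exists s : seq (R * R), \sum_(p <- s) p.1 * u * p.2 = 1.

Definition feckly_clean_elt (R : nzRingType) (a : R) : Prop :=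
  exists e u : R, full u /\ a = e + u /\
    (forall r : R, jacobson (e * r * (1 - e))).

Definition feckly_clean (R : nzRingType) : Prop :=
  forall a : R, feckly_clean_elt a.

(* Main.v *)
Require Import Defs.
From mathcomp Require Import all_boot all_order all_algebra.
From mathcomp Require Import classical_sets.
From Stdlib Require Import Classical.
Import GRing.Theory.
Local Open Scope ring_scope.
Set Implicit Arguments.

Section Aux.
Variable R : nzRingType.

Lemma idem_l (e : R) : e * e = e -> (1 - e) * e = 0.
Proof. by move=> ee; rewrite mulrBl mul1r ee subrr. Qed.

Lemma idem_r (e : R) : e * e = e -> e * (1 - e) = 0.
Proof. by move=> ee; rewrite mulrBr mulr1 ee subrr. Qed.

Lemma idem_c (e : R) : e * e = e -> (1 - e) * (1 - e) = 1 - e.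
Proof. by move=> ee; rewrite mulrBr mulr1 idem_l // subr0. Qed.

Lemma split_right (I : R -> Prop) (e : R) : e * e = e ->
  maximal_right_ideal I -> two_sided_ideal I -> I e \/ I (1 - e).
Proof.
move=> ee [[I0 [ID IM]] [I1 Imax]] [_ [_ [_ IL]]].
case: (classic (I e)) => Ie; [by left | right].
pose K y := exists i z, I i /\ y = i + e * z.
have Kr : right_ideal K.
  split; first by exists 0, 0; rewrite mulr0 addr0.
  split.
    move=> a b [i [z [Ii ->]]] [j [w [Ij ->]]].
    exists (i + j), (z + w); split; first exact: ID.
    by rewrite mulrDr addrACA.
  move=> a r [i [z [Ii ->]]]; exists (i * r), (z * r); split; first exact: IM.
  by rewrite mulrDl mulrA.
have IK : forall x, I x -> K x by move=> x Ix; exists x, 0; rewrite mulr0 addr0.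
have K1 : K 1.
  apply: NNPP => nK1; apply: Ie; apply: (Imax K Kr IK nK1).
  by exists 0, 1; rewrite mulr1 add0r.
case: K1 => i [z [Ii E]].
have -> : 1 - e = (1 - e) * i.
  have h : 1 - e = (1 - e) * (i + e * z) by rewrite -E mulr1.
  by rewrite {1}h mulrDr mulrA idem_l // mul0r addr0.
exact: IL.
Qed.

Lemma split_left (L : R -> Prop) (e : R) : e * e = e ->
  maximal_left_ideal L -> two_sided_ideal L -> L e \/ L (1 - e).
Proof.
move=> ee [[L0 [LD LM]] [L1 Lmax]] [[_ [_ IR]] _].
case: (classic (L e)) => Le; [by left | right].
pose K y := exists i z, L i /\ y = i + z * e.
have Kl : left_ideal K.
  split; first by exists 0, 0; rewrite mul0r addr0.
  split.
    move=> a b [i [z [Ii ->]]] [j [w [Ij ->]]].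
    exists (i + j), (z + w); split; first exact: LD.
    by rewrite mulrDl addrACA.
  move=> a r [i [z [Ii ->]]]; exists (r * i), (r * z); split; first exact: LM.
  by rewrite mulrDr mulrA.
have IK : forall x, L x -> K x by move=> x Ix; exists x, 0; rewrite mul0r addr0.
have K1 : K 1.
  apply: NNPP => nK1; apply: Le; apply: (Lmax K Kl IK nK1).
  by exists 0, 1; rewrite mul1r add0r.
case: K1 => i [z [Ii E]].
have -> : 1 - e = i * (1 - e).
  have h : 1 - e = (i + z * e) * (1 - e) by rewrite -E mul1r.
  by rewrite {1}h mulrDl -mulrA idem_r // mulr0 addr0.
exact: IR.
Qed.

Lemma full_lemma (a e r s : R) : e * e = e -> e = a * r -> 1 - e = (1 - a) * s ->
  full (a - (1 - e)).
Proof.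
move=> ee er es.
exists [:: (e, r * e); (- (1 - e), s * (1 - e))].
rewrite big_cons big_cons big_nil addr0 /=.
have h1 : e * (a - (1 - e)) = e * a by rewrite mulrBr idem_r // subr0.
have h2 : - (1 - e) * (a - (1 - e)) = (1 - e) * (1 - a).
  rewrite mulNr mulrBr idem_c // mulrBr mulr1 opprB.
  by [].
rewrite h1 h2 !mulrA -(mulrA e a r) -er ee ee.
rewrite -(mulrA (1 - e) (1 - a) s) -es !idem_c //.
by rewrite addrC subrK.
Qed.

Lemma exists_max_left (t : R) : ~ (exists w, w * t = 1) ->
  exists L : R -> Prop, maximal_left_ideal L /\ L t.
Proof.
move=> nt.
pose P (A : set R) := A = set0 \/ (left_ideal A /\ A t /\ ~ A 1).
have PA : forall A a, P A -> A a -> left_ideal A /\ A t /\ ~ A 1.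
  by move=> A a [-> //|//].
have [A [PAA Amax]] : exists A, P A /\ forall B, (A `<` B)%classic -> ~ P B.
  apply: Zorn_bigcup => F FP Ftot.
  case: (classic (exists X, F X /\ X t)) => [[X0 [FX0 X0t]]|nX]; last first.
    left; apply/seteqP; split => y //= [X FX Xy].
    case: (FP X FX) => [XE|[_ [Xt _]]]; last by apply: nX; exists X.
    by rewrite XE in Xy.
  right.
  have [[X00 _] _] := PA X0 t (FP X0 FX0) X0t.
  have big : forall X Y a b, F X -> F Y -> X a -> Y b ->
      exists Z, F Z /\ Z a /\ Z b.
    move=> X Y a b FX FY Xa Yb.
    case: (Ftot X Y FX FY) => [XY|YX].
      by exists Y; split => //; split => //; apply: XY.
    by exists X; split => //; split => //; apply: YX.
  split; first split.
  - by exists X0.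
  - split.
      move=> a b [X FX Xa] [Y FY Yb].
      have [Z [FZ [Za Zb]]] := big X Y a b FX FY Xa Yb.
      have [[_ [ZD _]] _] := PA Z a (FP Z FZ) Za.
      by exists Z => //; apply: ZD.
    move=> a r [X FX Xa].
    have [[_ [_ XM]] _] := PA X a (FP X FX) Xa.
    by exists X => //; apply: XM.
  split; first by exists X0.
  move=> [X FX X1].
  by have [_ [_ nX1]] := PA X 1 (FP X FX) X1.
have PB : P (fun y => exists w, y = w * t).
  right; split; first split.
  - by exists 0; rewrite mul0r.
  - split.
      by move=> a b [w ->] [v ->]; exists (w + v); rewrite mulrDl.
    by move=> a r [w ->]; exists (r * w); rewrite mulrA.
  split; first by exists 1; rewrite mul1r.
  by move=> [w E]; apply: nt; exists w.
case: PAA => [A0|[Al [At nA1]]].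
  exfalso; apply: (Amax _ _ PB); rewrite A0; split => //.
  by move=> /(_ t) H; apply: H; exists 1; rewrite mul1r.
exists A; split => //; split => //; split => //.
move=> J Jl AJ nJ1 x Jx.
apply: NNPP => nAx.
apply: (Amax J); last by right; split => //; split => //; apply: AJ.
split => // H; apply: nAx; exact: H.
Qed.

Lemma left_inv (t : R) : (forall L, maximal_left_ideal L -> L t) ->
  exists w, w * (1 - t) = 1.
Proof.
move=> Ht; apply: NNPP => nw.
have [L [Lmax L1t]] := exists_max_left (1 - t) nw.
have [[L0 [LD LM]] [L1 _]] := Lmax.
apply: L1; rewrite -(subrK t 1); apply: LD => //.
exact: Ht.
Qed.

End Aux.

Theorem theorem4p5 (R : nzRingType) :
  exchange_ring R -> (right_quasi_duo R \/ left_quasi_duo R) -> feckly_clean R.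
Proof.
move=> exch qd a.
have [e [ee [[r er] [s es]]]] := exch a.
exists (1 - e), (a - (1 - e)); split; first exact: full_lemma ee er es.
split; first by rewrite [RHS]addrC subrK.
have -> : 1 - (1 - e) = e by rewrite opprB addrCA subrr addr0.
move=> x.
case: qd => [rqd|lqd].
  move=> I Imax; have Its := rqd I Imax.
  have [[_ [_ IM]] [_ [_ IL]]] := Its.
  case: (split_right ee Imax Its) => He.
    by apply: IL.
  by apply: (IM); apply: (IM).
set y := (1 - e) * x * e.
move=> I [[I0 [ID IM]] [I1 Imax]].
apply: NNPP => nIy.
pose K z := exists i w, I i /\ z = i + y * w.
have Kr : right_ideal K.
  split; first by exists 0, 0; rewrite mulr0 addr0.
  split.
    move=> p q [i [z [Ii ->]]] [j [w [Ij ->]]].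
    exists (i + j), (z + w); split; first exact: ID.
    by rewrite mulrDr addrACA.
  move=> p q [i [z [Ii ->]]]; exists (i * q), (z * q); split; first exact: IM.
  by rewrite mulrDl mulrA.
have IK : forall z, I z -> K z by move=> z Iz; exists z, 0; rewrite mulr0 addr0.
have K1 : K 1.
  apply: NNPP => nK1; apply: nIy; apply: (Imax K Kr IK nK1).
  by exists 0, 1; rewrite mulr1 add0r.
case: K1 => i [w [Ii E]].
have inL : forall L, maximal_left_ideal L -> L (y * w).
  move=> L Lmax; have Lts := lqd L Lmax.
  have [[_ [_ LM]] [_ [_ LL]]] := Lts.
  case: (split_left ee Lmax Lts) => He; apply: (LM).
    by apply: LL.
  by apply: (LM); apply: (LM).
have [v hv] := left_inv inL.
have inL2 : forall L, maximal_left_ideal L -> L (- (v * (y * w))).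
  move=> L Lmax; have [_ [_ LL]] := (lqd L Lmax).2.
  rewrite -mulN1r; apply: (LL); apply: (LL); exact: inL.
have [v' hv'] := left_inv inL2.
have hv1 : v = 1 - - (v * (y * w)).
  by rewrite opprK -hv mulrBr mulr1 subrK.
rewrite -hv1 in hv'.
have iE : i = 1 - y * w by rewrite E addrK.
have : I (i * v) by apply: IM.
have -> : i * v = 1.
  have -> : i = v'.
    by rewrite -(mulr1 v') -hv mulrA hv' mul1r iE.
  exact: hv'.
exact: I1.
Qed.
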